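(* Let $P$ be a finite partial IP loop. Then $\#\Gamma(P)\equiv(\#P-1)(\#P-2)-o_3(P)\pmod 6$.
   Context: A partial IP loop is a set $P$ with a partial binary operation $(x,y)\mapsto xy$ defined on a subset $D(P)\subseteq P\times P$ (the domain) such that: (1) there is $1\in P$ with $(1,x),(x,1)\in D(P)$ and $1x=x1=x$ for all $x\in P$; (2) for each $x\in P$ there is a unique $y\in P$, denoted $x^{-1}$, with $(x,y),(y,x)\in D(P)$ and $xy=yx=1$; (3) whenever $(x,y)\in D(P)$, we have $(x^{-1},xy),(xy,y^{-1})\in D(P)$ and $x^{-1}(xy)=y$, $(xy)y^{-1}=x$. The set of gaps is $\Gamma(P)=(P\times P)\setminus D(P)$. $O_3(P)=\{x\in P: (x,x)\in D(P),\ (x,xx)\in D(P),\ x\neq 1,\ x(xx)=1\}$ and $o_3(P)=\#O_3(P)$; $\#A$ denotes the cardinality of a finite set $A$. *)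

(* Defs.v *)
From mathcomp Require Import all_boot all_order all_algebra.
Set Implicit Arguments. Unset Strict Implicit. Unset Printing Implicit Defensive.

(* A partial binary operation on a finite carrier P is represented by a
   boolean domain relation D (D x y  <=>  (x,y) \in D(P)) together with a
   total function mul : P -> P -> P whose values are only relevant on D. *)
Definition partial_IP_loop (P : finType) (D : rel P) (mul : P -> P -> P)
  (one : P) : Prop :=
  [/\
      (forall x, [/\ D one x, D x one, mul one x = x & mul x one = x]),
      (forall x, exists y, [/\ D x y, D y x, mul x y = one, mul y x = one &
          forall z, D x z -> D z x -> mul x z = one -> mul z x = one -> z = y])
    &
      (forall x y inv_x inv_y,
          D x inv_x -> D inv_x x -> mul x inv_x = one -> mul inv_x x = one ->
          D y inv_y -> D inv_y y -> mul y inv_y = one -> mul inv_y y = one ->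
          D x y ->
          [/\ D inv_x (mul x y), D (mul x y) inv_y,
              mul inv_x (mul x y) = y & mul (mul x y) inv_y = x])].

Definition gaps (P : finType) (D : rel P) : {set P * P} :=
  [set p : P * P | ~~ D p.1 p.2].

Definition O3 (P : finType) (D : rel P) (mul : P -> P -> P) (one : P) : {set P} :=
  [set x : P | [&& D x x, D x (mul x x), x != one & mul x (mul x x) == one]].

(* Main.v *)
Require Import Defs.
From mathcomp Require Import all_boot all_order all_algebra.
From mathcomp Require Import all_fingroup all_solvable zify.
Import GRing.Theory Num.Theory.
Local Open Scope ring_scope.

Lemma fix_mod (T : finType) (p : nat) (f : T -> T) (S : {set T}) :
  prime p -> (forall x, iter p f x = x) -> (forall x, x \in S -> f x \in S) ->
  (#|S| = #|[set x in S | f x == x]| %[mod p])%N.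
Proof.
move=> pp fp fS.
have finj : injective f.
  apply: (can_inj (g := iter p.-1 f)) => x.
  by rewrite -iterSr prednK ?prime_gt0 // fp.
pose g := perm finj.
have gE x : g x = f x by rewrite permE.
have gp : (g ^+ p = 1)%g.
  by apply/permP => x; rewrite permX perm1 (eq_iter gE) fp.
have pG : (p.-group <[g]>)%g.
  rewrite /pgroup -orderE; apply: pnat_dvd (pnat_id pp).
  by rewrite order_dvdn gp.
have acts : ([acts <[g]>, on S | 'P])%g.
  rewrite cycle_subG !inE /=; apply/subsetP => x Sx.
  by rewrite inE /= /aperm gE fS.
rewrite (pgroup_fix_mod pG acts); congr (_ %% _)%N.
by apply: eq_card => x; rewrite afix_cycle !inE /= sub1set inE /aperm gE.
Qed.

Lemma arith (g s n o : nat) : (g + s = n * n)%N -> (s = o + 1 %[mod 3])%N ->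
  (s = n %[mod 2])%N -> (o = 0 %[mod 2])%N ->
  (g%:Z = (n%:Z - 1) * (n%:Z - 2) - o%:Z %[mod 6])%Z.
Proof. move=> *. lia. Qed.

Definition invb {P : finType} (D : rel P) (mul : P -> P -> P) (one : P) x y :=
  [&& D x y, D y x, mul x y == one & mul y x == one].
Definition inv {P : finType} (D : rel P) (mul : P -> P -> P) (one : P) x :=
  odflt one [pick y | invb D mul one x y].


Lemma inv_spec {P : finType} {D : rel P} {mul : P -> P -> P} {one : P} :
  partial_IP_loop D mul one -> forall x,
  let i := inv D mul one x in [/\ D x i, D i x, mul x i = one & mul i x = one].
Proof.
case=> _ H2 _ x /=; rewrite /inv; case: pickP => [y /and4P[? ? /eqP ? /eqP ?] //|].
case: (H2 x) => y [a b c d _] /(_ y); rewrite /invb a b c d !eqxx //.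
Qed.

Lemma inv_uniq {P : finType} {D : rel P} {mul : P -> P -> P} {one : P} :
  partial_IP_loop D mul one -> forall x y,
  D x y -> D y x -> mul x y = one -> mul y x = one -> y = inv D mul one x.
Proof.
move=> H x y a b c d; have [a' b' c' d'] := inv_spec H x.
case: H => _ H2 _; case: (H2 x) => y0 [_ _ _ _ U].
by rewrite (U _ a b c d) (U _ a' b' c' d').
Qed.

Lemma ax3 {P : finType} {D : rel P} {mul : P -> P -> P} {one : P} :
  partial_IP_loop D mul one -> forall x y, D x y ->
  let ix := inv D mul one x in let iy := inv D mul one y in
  [/\ D ix (mul x y), D (mul x y) iy, mul ix (mul x y) = y & mul (mul x y) iy = x].
Proof.
move=> H x y Dxy /=; have [a b c d] := inv_spec H x; have [a' b' c' d'] := inv_spec H y.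
by case: H => _ _ H3; apply: H3.
Qed.

Lemma invK {P : finType} {D : rel P} {mul : P -> P -> P} {one : P} :
  partial_IP_loop D mul one -> forall x, inv D mul one (inv D mul one x) = x.
Proof.
move=> H x; have [a b c d] := inv_spec H x.
by apply/esym/(inv_uniq H).
Qed.

Lemma inv1 {P : finType} {D : rel P} {mul : P -> P -> P} {one : P} :
  partial_IP_loop D mul one -> inv D mul one one = one.
Proof.
move=> H; have [H1 _ _] := H; have [a b c _] := H1 one.
by apply/esym/(inv_uniq H).
Qed.

Lemma prod_inv {P : finType} {D : rel P} {mul : P -> P -> P} {one : P} :
  partial_IP_loop D mul one -> forall x y, D x y -> mul x y = one -> y = inv D mul one x.
Proof.
move=> H x y Dxy e; have [_ _ c _] := ax3 H _ _ Dxy; rewrite e in c.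
have [H1 _ _] := H; have [_ _ _ e1] := H1 (inv D mul one x).
by rewrite -c e1.
Qed.

Lemma cancel_l {P : finType} {D : rel P} {mul : P -> P -> P} {one : P} :
  partial_IP_loop D mul one -> forall x y, D x y -> mul x y = x -> y = one.
Proof.
move=> H x y Dxy e; have [_ _ c _] := ax3 H _ _ Dxy; rewrite e in c.
have [_ _ _ d] := inv_spec H x; by rewrite -c d.
Qed.

Lemma rot {P : finType} {D : rel P} {mul : P -> P -> P} {one : P} :
  partial_IP_loop D mul one -> forall x y, D x y ->
  D y (inv D mul one (mul x y)) /\ mul y (inv D mul one (mul x y)) = inv D mul one x.
Proof.
move=> H x y Dxy; have [a _ c _] := ax3 H _ _ Dxy.
have [a' b' _ d'] := ax3 H _ _ a; by rewrite c in b' d'.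
Qed.

Lemma O3P {P : finType} {D : rel P} {mul : P -> P -> P} {one : P} :
  partial_IP_loop D mul one -> forall x,
  x \in O3 D mul one = [&& D x x, x != one & mul x x == inv D mul one x].
Proof.
move=> H x; rewrite inE; apply/and4P/and3P => [[a b c /eqP d]|[a b /eqP c]].
  by split => //; apply/eqP/(prod_inv H).
have [e _ f _] := inv_spec H x.
by split => //; rewrite c ?e ?f.
Qed.

Theorem lemma2 (P : finType) (D : rel P) (mul : P -> P -> P) (one : P) :
  partial_IP_loop D mul one ->
  (#|gaps D|%:Z = (#|P|%:Z - 1) * (#|P|%:Z - 2) - #|O3 D mul one|%:Z %[mod 6])%Z.
Proof.
move=> H.
set inv' := inv D mul one.
pose S := [set p : P * P | D p.1 p.2].
pose rho (p : P * P) := if D p.1 p.2 then (p.2, inv' (mul p.1 p.2)) else p.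
pose sig (p : P * P) := if D p.1 p.2 then (mul p.1 p.2, inv' p.2) else p.
have [H1 _ _] := H.
apply: arith.
- rewrite -card_prod -(cardsC S) addnC; congr (_ + _)%N.
  by apply: eq_card => -[a b]; rewrite !inE.
- have cl : forall p, p \in S -> rho p \in S.
    move=> [x y]; rewrite !inE /rho /= => Dxy; rewrite Dxy /=.
    by case: (rot H _ _ Dxy).
  have it : forall p, iter 3 rho p = p.
    move=> [x y]; rewrite /=.
    case Dxy: (D x y); last by rewrite /rho /= !Dxy.
    have [D1 e1] := rot H _ _ Dxy.
    have [D2 e2] := rot H _ _ D1; rewrite /inv' e1 invK // in D2 e2.
    by rewrite /rho /= Dxy /= D1 /= /inv' e1 invK // D2 /= e2 invK.
  rewrite (@fix_mod _ 3 rho S) //.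
  + congr (_ %% 3)%N.
    have n1 : (one \notin O3 D mul one) = true by rewrite (O3P H) eqxx andbF.
    rewrite addnC -[1%N]/(nat_of_bool true) -n1 -cardsU1.
    rewrite -(card_imset _ (f := fun x : P => (x, x))); last by move=> a b [].
    apply: eq_card => -[a b]; rewrite !inE /rho /=.
    apply/idP/idP.
    * case/andP => Dab; rewrite Dab => /eqP [eba ea].
      subst b; apply/imsetP; exists a => //.
      rewrite in_setU1 (O3P H) Dab.
      case: eqP => //= _; apply/eqP.
      by rewrite -[in RHS]ea /inv' invK.
    * case/imsetP => x; rewrite in_setU1 (O3P H) => Hx [-> ->].
      case: eqP Hx => [->|_] /=.
        have [a1 _ e1 _] := H1 one; rewrite a1 /= e1 /inv' (inv1 H) //.
      case/andP=> Dxx /eqP e; rewrite Dxx /= e /inv' invK //.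
- have cl : forall p, p \in S -> sig p \in S.
    move=> [x y]; rewrite !inE /sig /= => Dxy; rewrite Dxy /=.
    by case: (ax3 H _ _ Dxy).
  have it : forall p, iter 2 sig p = p.
    move=> [x y]; rewrite /=.
    case Dxy: (D x y); last by rewrite /sig /= !Dxy.
    have [_ D1 _ e1] := ax3 H _ _ Dxy.
    by rewrite /sig /= Dxy /= D1 /= e1 /inv' invK.
  rewrite (@fix_mod _ 2 sig S) //.
  + congr (_ %% 2)%N.
    rewrite -(card_imset _ (f := fun x : P => (x, one))); last first.
      by move=> a b [].
    apply: eq_card => -[a b]; rewrite !inE /sig /=.
    apply/idP/idP.
    * case/andP => Dab; rewrite Dab => /eqP [eba ea].
      apply/imsetP; exists a => //=.
      by rewrite (cancel_l H _ _ Dab eba).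
    * case/imsetP => x _ [-> ->].
      have [_ a1 _ e1] := H1 x; rewrite a1 /= e1 /inv' (inv1 H) //.
- have cl : forall x, x \in O3 D mul one -> inv' x \in O3 D mul one.
    move=> x; rewrite !(O3P H) => /and3P[Dxx x1 /eqP e].
    have [_ D1 _ e1] := ax3 H _ _ Dxx; rewrite e in D1 e1.
    rewrite D1 /= e1 /inv' invK // eqxx andbT.
    by apply: contra x1 => /eqP e2; rewrite -(invK H x) e2 (inv1 H).
  have it : forall x, iter 2 inv' x = x by move=> x /=; rewrite /inv' !invK.
  rewrite (@fix_mod _ 2 inv' (O3 D mul one)) //.
  + congr (_ %% 2)%N; apply/eqP; rewrite cards_eq0; apply/eqP/setP => x.
    rewrite inE in_set0 (O3P H); apply/negP => /andP[/and3P[Dxx x1 /eqP e] /eqP e2].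
    by move: e; rewrite -/inv' e2 => e; move: x1; rewrite (cancel_l H _ _ Dxx e) eqxx.
Qed.
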